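(* Let $\ell\ge2$ and let $G$ be a graph such that every connected component of $\overline{G}$ is a pendant tree. If $c$ is the number of connected components of $\overline{G}$, then $G$ is $N$-AW if and only if $\gcd(2c-1,\ell)=1$.
   Context: All graphs are finite and simple; $\overline{G}$ is the complement. For a graph $H$, $H\odot K_1$ is obtained from $H$ by adding, for each vertex $u$ of $H$, a new vertex adjacent only to $u$; a pendant tree is a tree of this form. Labels lie in $\mathbb{Z}_\ell$. In the neighborhood Lights Out game, toggling a vertex $w$ adds $1$ (mod $\ell$) to the label of each vertex of the closed neighborhood $N[w]$; the game is won when all labels are $0$; a graph is $N$-AW if every initial labeling can be won. *)

(* Defs.v *)
From mathcomp Require Import all_boot all_order all_algebra.
Set Implicit Arguments. Unset Strict Implicit. Unset Printing Implicit Defensive.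
Import GRing.Theory.

Definition simple_graph (T : finType) (e : rel T) : Prop :=
  symmetric e /\ irreflexive e.

Definition compl_rel (T : finType) (e : rel T) : rel T :=
  fun x y => (x != y) && ~~ e x y.

Definition induced (T : finType) (g : rel T) (C : {set T}) : rel T :=
  fun x y => [&& x \in C, y \in C & g x y].

Definition components (T : finType) (g : rel T) : {set {set T}} :=
  [set [set y | connect g x y] | x : T].

(* the induced subgraph of g on C is a tree:
   nonempty, connected, and with exactly #|C| - 1 edges
   (ordered pairs counted, hence 2 * (#|C| - 1)). *)
Definition is_tree_on (T : finType) (g : rel T) (C : {set T}) : Prop :=
  [/\ 0 < #|C|,
      {in C &, forall x y, connect (induced g C) x y} &
      #|[set p : T * T | induced g C p.1 p.2]| = 2 * (#|C| - 1)].

(* the induced subgraph of g on C is isomorphic to H ⊙ K1 for some graph H: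
   H is the induced subgraph on S, and m u is the pendant vertex attached to u. *)
Definition is_corona_K1_on (T : finType) (g : rel T) (C : {set T}) : Prop :=
  exists (S : {set T}) (m : T -> T),
    [/\ S \subset C, {in S &, injective m}, C :\: S = m @: S &
        forall u x, u \in S -> x \in C -> g (m u) x = (x == u)].

Definition is_pendant_tree (T : finType) (g : rel T) (C : {set T}) : Prop :=
  is_tree_on g C /\ is_corona_K1_on g C.

Definition closed_nbhd (T : finType) (e : rel T) (w : T) : pred T :=
  fun v => (v == w) || e w v.

(* playing the sequence of toggles s from labeling f wins the game:
   each toggle of w adds 1 to each vertex of N[w]. *)
Definition wins (T : finType) (e : rel T) (l : nat) (f : T -> 'Z_l) (s : seq T) : Prop :=
  forall v : T, (f v + (count (fun w => closed_nbhd e w v) s)%:R = 0 :> 'Z_l)%R.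

Definition N_AW (T : finType) (e : rel T) (l : nat) : Prop :=
  forall f : T -> 'Z_l, exists s : seq T, @wins T e l f s.

(* Main.v *)
Require Import Defs.
From mathcomp Require Import all_boot all_order all_algebra.
From mathcomp Require Import ring zify.
Set Implicit Arguments. Unset Strict Implicit. Unset Printing Implicit Defensive.
Import GRing.Theory.

Section Core.
Local Open Scope ring_scope.
Definition pstruct (T : finType) (H : rel T) (S : {set T}) (m a : T -> T) : Prop :=
 [/\ symmetric H,
     forall u, u \in S -> m u \notin S /\ a (m u) = u,
     forall v, v \notin S -> a v \in S /\ m (a v) = v &
     forall u x, u \in S -> H (m u) x = (x == u)].

Definition degS (T : finType) (H : rel T) (S : {set T}) u := #|[set v in S | H u v]|.


Definition omega (R : pzRingType) (T : finType) (H : rel T) (S : {set T}) (a : T -> T) (v : T) : R :=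
  if v \in S then 1 else 1 - (degS H S (a v))%:R.

Definition Binv (R : pzRingType) (T : finType) (H : rel T) (S : {set T}) (m a : T -> T) (y : T -> R) (v : T) : R :=
  if v \in S then y (m v) else y (a v) - \sum_(u | (u \in S) && H (a v) u) y (m u).

Lemma ps_nbr_out (T : finType) (H : rel T) S m a w v :
  pstruct H S m a -> w \notin S -> H w v = (v == a w).
Proof. move=> [_ _ h3 h4] wS; have [aS maw] := h3 w wS. by rewrite -{1}maw h4. Qed.

Lemma ps_cond_m (T : finType) (H : rel T) S m a v :
  pstruct H S m a -> v \in S -> forall w, (H w v && (w \notin S)) = (w == m v).
Proof.
move=> ps vS w; have [sH h2 h3 h4] := ps.
have [mvS amv] := h2 v vS.
apply/idP/eqP.
- move=> /andP[Hwv wS]; rewrite (ps_nbr_out v ps wS) in Hwv.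
  have [_ maw] := h3 w wS. by rewrite (eqP Hwv) maw.
- move=> ->; by rewrite mvS h4 // eqxx.
Qed.

Lemma F1 (R : pzRingType) (T : finType) (H : rel T) S m a (y : T -> R) v :
  pstruct H S m a -> \sum_(w | H w v) Binv H S m a y w = y v.
Proof.
move=> ps; have [sH h2 h3 h4] := ps.
case: (boolP (v \in S)) => vS.
- rewrite (bigID (fun w => w \in S)) /=.
  rewrite [X in _ + X](eq_bigl (fun w => w == m v)); last by move=> w; exact: (ps_cond_m ps vS).
  rewrite big_pred1_eq {2}/Binv.
  have [mvS amv] := h2 v vS. rewrite (negbTE mvS) amv.
  rewrite (eq_bigr (fun w => y (m w))); last by move=> w /andP[_ wS]; rewrite /Binv wS.
  rewrite (eq_bigl (fun u => (u \in S) && H v u)); last by move=> w; rewrite sH andbC.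
  by rewrite addrC subrK.
- have [aS maw] := h3 v vS.
  rewrite (eq_bigl (fun w => w == a v)); last by move=> w; rewrite sH -{1}maw h4.
  by rewrite big_pred1_eq /Binv aS maw.
Qed.

Lemma Aomega (R : pzRingType) (T : finType) (H : rel T) S m a w :
  pstruct H S m a -> \sum_(v | H w v) (omega R H S a v) = 1.
Proof.
move=> ps; have [sH h2 h3 h4] := ps.
case: (boolP (w \in S)) => wS.
- rewrite (bigID (fun v => v \in S)) /=.
  rewrite [X in _ + X](eq_bigl (fun v => v == m w)); last first.
    by move=> v; rewrite sH; exact: (ps_cond_m ps wS).
  rewrite big_pred1_eq {2}/omega.
  have [mwS amw] := h2 w wS. rewrite (negbTE mwS) amw.
  rewrite (eq_bigr (fun _ => 1)); last by move=> v /andP[_ vS]; rewrite /omega vS.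
  rewrite (eq_bigl (fun v => v \in [set v in S | H w v])); last first.
    by move=> v; rewrite inE andbC.
  by rewrite sumr_const /degS addrC subrK.
- have [aS maw] := h3 w wS.
  rewrite (eq_bigl (fun v => v == a w)); last by move=> v; rewrite -{1}maw h4.
  by rewrite big_pred1_eq /omega aS.
Qed.

Lemma F2 (R : comPzRingType) (T : finType) (H : rel T) S m a (x : T -> R) :
  pstruct H S m a ->
  \sum_v omega R H S a v * (\sum_(w | H w v) x w) = \sum_w x w.
Proof.
move=> ps; have [sH _ _ _] := ps.
rewrite (eq_bigr (fun v => \sum_w (if H w v then omega R H S a v * x w else 0))); last first.
  move=> v _; rewrite mulr_sumr [LHS]big_mkcond /=; apply: eq_bigr => w _; by case: (H w v).
rewrite exchange_big /=; apply: eq_bigr => w _.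
transitivity ((\sum_(v | H w v) omega R H S a v) * x w); last by rewrite (Aomega _ _ ps) mul1r.
rewrite mulr_suml [RHS]big_mkcond /=; apply: eq_bigr => v _; by rewrite sH; case: (H v w).
Qed.

Lemma reindex_m (R : nmodType) (T : finType) (H : rel T) S m a (g : T -> R) :
  pstruct H S m a -> \sum_(v | v \notin S) g v = \sum_(u | u \in S) g (m u).
Proof.
move=> ps; have [sH h2 h3 h4] := ps.
rewrite (reindex_onto m a); last by move=> v vS; case: (h3 v vS).
apply: eq_bigl => j; case: (boolP (j \in S)) => jS.
- by have [-> ->] := h2 j jS; rewrite eqxx.
- apply/negbTE/negP => /andP[mjS /eqP amj].
  have [aS _] := h3 _ mjS. by rewrite amj (negbTE jS) in aS.
Qed.

Lemma sum_omega (R : pzRingType) (T : finType) (H : rel T) S m a (c : nat) :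
  pstruct H S m a -> (\sum_(u in S) degS H S u + 2 * c = 2 * #|S|)%N ->
  \sum_v omega R H S a v = (2 * c)%:R.
Proof.
move=> ps hc.
rewrite (bigID (fun v => v \in S)) /=.
rewrite (eq_bigr (fun _ => 1)); last by move=> v vS; rewrite /omega vS.
rewrite [X in _ + X](eq_bigr (fun v => 1 - (degS H S (a v))%:R)); last by move=> v /negbTE vS; rewrite /omega vS.
rewrite (reindex_m _ ps).
have [_ h2 _ _] := ps.
rewrite [X in _ + X](eq_bigr (fun u => 1 - (degS H S u)%:R)); last by move=> u uS; have [_ ->] := h2 u uS.
rewrite sumrB -natr_sum sumr_const.
by rewrite addrA -natrD addnn -mul2n -hc natrD addrC addKr.
Qed.

Lemma F4 (R : zmodType) (T : finType) (e : rel T) (x : T -> R) v :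
  \sum_(w | closed_nbhd e w v) x w = \sum_w x w - \sum_(w | compl_rel e w v) x w.
Proof.
rewrite [\sum_w x w](bigID (fun w => compl_rel e w v)) /= addrAC subrr add0r.
apply: eq_bigl => w; rewrite /closed_nbhd /compl_rel negb_and negbK eq_sym.
by rewrite negbK.
Qed.

Lemma core_equiv (R : comUnitRingType) (T : finType) (e : rel T) S m a (c : nat) :
  pstruct (compl_rel e) S m a ->
  (\sum_(u in S) degS (compl_rel e) S u + 2 * c = 2 * #|S|)%N ->
  (forall f : T -> R, exists x : T -> R, forall v, f v + \sum_(w | closed_nbhd e w v) x w = 0)
  <-> ((2 * c)%:R - 1 : R) \is a GRing.unit.
Proof.
set H := compl_rel e => ps hc.
have kap := @sum_omega R _ _ _ _ _ _ ps hc.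
have [sH _ _ _] := ps.
split.
- move=> hf; case: (pickP (fun _ : T => true)) => [t _ | none]; last first.
    rewrite -kap big_pred0 ?sub0r ?unitrN1 //.
  have [x hx] := hf (fun v => if H t v then 1 else 0).
  set sig := \sum_w x w.
  have key : \sum_v omega R H S a v * ((if H t v then 1 else 0) + \sum_(w | closed_nbhd e w v) x w) = 0.
    by rewrite big1 // => v _; rewrite hx mulr0.
  have e1 : forall v, omega R H S a v * ((if H t v then 1 else 0) + \sum_(w | closed_nbhd e w v) x w)
     = ((if H t v then omega R H S a v else 0) + sig * omega R H S a v) - omega R H S a v * \sum_(w | H w v) x w.
    move=> v; rewrite F4 -/sig; case: (H t v); ring.
  rewrite (eq_bigr _ (fun v _ => e1 v)) sumrB big_split /= -big_mkcond (Aomega _ _ ps) -mulr_sumr kap in key.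
  rewrite (F2 _ ps) -/sig in key.
  apply/unitrPr; exists (- sig).
  have -> : ((2 * c)%:R - 1) * - sig = 1 - (1 + sig * (2 * c)%:R - sig) :> R by ring.
  by rewrite key subr0.
- move=> un f.
  set phi := \sum_v omega R H S a v * f v.
  set sig := - phi * ((2 * c)%:R - 1)^-1.
  exists (Binv H S m a (fun v => sig + f v)) => v.
  rewrite F4 (F1 _ _ ps) -(F2 _ ps).
  rewrite (eq_bigr (fun v => omega R H S a v * (sig + f v))); last by move=> w _; rewrite (F1 _ _ ps).
  under eq_bigr do rewrite mulrDr.
rewrite big_split /= -/phi -mulr_suml kap.
  have hs : sig * ((2 * c)%:R - 1) = - phi by rewrite /sig -mulrA mulVr // mulr1.
  have -> : f v + ((2 * c)%:R * sig + phi - (sig + f v)) = sig * ((2 * c)%:R - 1) + phi :> R by ring.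
  by rewrite hs addNr.
Qed.
End Core.
Lemma card_pairs (T : finType) (P : rel T) :
  #|[set p : T * T | P p.1 p.2]| = \sum_x #|[set y | P x y]|.
Proof.
rewrite (eq_bigr (fun x => \sum_(y | P x y) 1)); last first.
  by move=> x _; rewrite -sum1_card; apply: eq_bigl => y; rewrite inE.
rewrite pair_big_dep /= -sum1_card; apply: eq_bigl => p; by rewrite inE.
Qed.

Lemma comp_count (T : finType) (H : rel T) (C S0 : {set T}) (m0 : T -> T) :
  symmetric H -> is_tree_on H C ->
  [/\ S0 \subset C, {in S0 &, injective m0}, C :\: S0 = m0 @: S0 &
        forall u x, u \in S0 -> x \in C -> H (m0 u) x = (x == u)] ->
  (\sum_(u in S0) #|[set w in S0 | H u w]| + 2 = 2 * #|S0|)%N.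
Proof.
move=> sH [C0 _ hE] [sub inj hC hm].
have cC : #|C| = (2 * #|S0|)%N.
  rewrite -(cardsID S0 C) hC card_in_imset // (setIidPr sub); lia.
have mC : forall u, u \in S0 -> m0 u \in C :\: S0 by move=> u uS; rewrite hC imset_f.
rewrite card_pairs in hE.
rewrite (bigID (fun x => x \in C)) /= [X in (_ + X)%N]big1 ?addn0 in hE; last first.
  move=> x /negbTE xC; rewrite (_ : [set y | induced H C x y] = set0) ?cards0 //; apply/setP => y.
  by rewrite !inE /induced xC.
rewrite (bigID (fun x => x \in S0)) /= in hE.
rewrite [X in (_ + X)%N](eq_bigr (fun _ => 1%N)) in hE; last first.
  move=> x /andP[xC xS].
  have : x \in C :\: S0 by rewrite inE xS xC.
  rewrite hC => /imsetP[u uS ->].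
  have uC : u \in C by apply: (subsetP sub).
  rewrite -(cards1 u); apply: eq_card => y; rewrite !inE /induced.
  have [muS muC] : m0 u \notin S0 /\ m0 u \in C by move: (mC u uS); rewrite inE => /andP.
  rewrite muC /=. case: (boolP (y \in C)) => yC /=; first by rewrite hm.
  by apply/esym/negbTE; apply: contraNneq yC => ->.
rewrite sum1_card in hE.
have cD : #|(fun i : T => (i \in C) && (i \notin S0))| = #|S0|.
  rewrite -(card_in_imset inj) -hC; apply: eq_card => i; by rewrite inE andbC.
rewrite cD in hE.
rewrite (eq_bigl (fun i => i \in S0)) in hE; last first.
  move=> i; rewrite andbC; case: (boolP (i \in S0)) => //= iS; by rewrite (subsetP sub).
rewrite (eq_bigr (fun u => #|[set w in S0 | H u w]| + 1)%N) in hE; last first.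
  move=> u uS.
  have uC : u \in C by apply: (subsetP sub).
  have [muS muC] : m0 u \notin S0 /\ m0 u \in C by move: (mC u uS); rewrite inE => /andP.
  rewrite (_ : [set y | induced H C u y] = m0 u |: [set w in S0 | H u w]).
    by rewrite cardsU1 inE (negbTE muS) addnC.
  apply/setP => y; rewrite !inE /induced uC /=.
  case: (eqVneq y (m0 u)) => [->|ymu] /=; first by rewrite muC sH hm // eqxx.
  case: (boolP (y \in S0)) => yS /=; first by rewrite (subsetP sub).
  case: (boolP (y \in C)) => yC //=.
  have : y \in C :\: S0 by rewrite inE yS yC.
  rewrite hC => /imsetP[u' u'S yE].
  rewrite yE sH hm // ?(subsetP sub) //.
  apply/negbTE; apply: contra_neq ymu => ->. by rewrite yE.
rewrite big_split /= sum1_card in hE.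
lia.
Qed.
Lemma build (T : finType) (H : rel T) : symmetric H ->
 (forall C, C \in components H -> is_pendant_tree H C) ->
 exists S m a, pstruct H S m a /\
   (\sum_(u in S) degS H S u + 2 * #|components H| = 2 * #|S|)%N.
Proof.
move=> sH hP.
pose K v := [set y | connect H v y].
have csym := sym_connect_sym sH.
have kin : forall v, v \in K v by move=> v; rewrite inE connect0.
have kc : forall u v, u \in K v -> K u = K v.
  move=> u v; rewrite inE => cvu; apply/setP => y; rewrite !inE.
  by rewrite (same_connect csym cvu).
have kH : forall u y, H u y -> y \in K u by move=> u y h; rewrite inE connect1.
have kcomp : forall v, K v \in components H by move=> v; apply: imset_f.
have compK : forall C, C \in components H -> exists v, C = K v.
  by move=> C /imsetP[v _ ->]; exists v.
have : forall C : {set T}, exists p : {set T} * (T -> T), C \in components H ->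
   is_tree_on H C /\ [/\ p.1 \subset C, {in p.1 &, injective p.2}, C :\: p.1 = p.2 @: p.1 &
        forall u x, u \in p.1 -> x \in C -> H (p.2 u) x = (x == u)].
  move=> C; case: (boolP (C \in components H)) => hC; last by exists (set0, id).
  have [tr [S0 [m0 cor]]] := hP C hC.
  by exists (S0, m0).
case/fin_all_exists => F hF.
pose SC C := (F C).1. pose mC C := (F C).2.
have hK : forall v, is_tree_on H (K v) /\ [/\ SC (K v) \subset K v, {in SC (K v) &, injective (mC (K v))},
     K v :\: SC (K v) = mC (K v) @: SC (K v) &
     forall u x, u \in SC (K v) -> x \in K v -> H (mC (K v) u) x = (x == u)].
  by move=> v; apply: hF.
pose S := [set u | u \in SC (K u)].
pose m u := mC (K u) u.
pose a v := odflt v [pick u in SC (K v) | mC (K v) u == v].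
have G1 : forall u, u \in S -> m u \in K u /\ m u \notin SC (K u).
  move=> u; rewrite inE => uS; have [_ [_ _ hc _]] := hK u.
  have : m u \in K u :\: SC (K u) by rewrite hc; apply: imset_f.
  by rewrite inE => /andP[-> ->].
have ps : pstruct H S m a.
  split => //.
  - move=> u uS; have [muK muS] := G1 u uS.
    have kmu := kc _ _ muK.
    split; first by rewrite inE kmu.
    rewrite /a kmu; case: pickP => [u' /andP[u'S /eqP e'] | none] /=.
      have [_ [_ inj _ _]] := hK u. apply: inj => //. by move: uS; rewrite inE.
    by move: (none u); rewrite eqxx andbT; move: uS; rewrite inE => ->.
  - move=> v; rewrite inE => vS.
    have [_ [sub _ hc _]] := hK v.
    have : v \in K v :\: SC (K v) by rewrite inE vS kin.
    rewrite hc => /imsetP[u0 u0S v0].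
    rewrite /a; case: pickP => [u' /andP[u'S /eqP e'] | none] /=; last first.
      by move: (none u0); rewrite u0S -v0 eqxx.
    have ku' : K u' = K v by apply: kc; apply: (subsetP sub).
    by rewrite inE /m ku' u'S e'.
  - move=> u x; rewrite inE => uS.
    have [_ [sub _ _ hm]] := hK u.
    case: (boolP (x \in K u)) => xK; first by rewrite /m hm.
    have uS0 : u \in S by rewrite inE.
    have [muK _] := G1 u uS0.
    rewrite (_ : (x == u) = false); last by apply: contraNF xK => /eqP ->.
    apply: contraNF xK => h; rewrite -(kc _ _ muK); exact: kH.
exists S, m, a; split => //.
have memS : forall v u, (u \in S) && (K u == K v) = (u \in SC (K v)).
  move=> v u; rewrite inE; apply/idP/idP => [/andP[h /eqP <-] //|h].
  have [_ [sub _ _ _]] := hK v.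
  have ku := kc _ _ (subsetP sub _ h). by rewrite ku h eqxx.
rewrite -[#|S|]sum1_card.
rewrite (partition_big K (fun C => C \in components H)) /=; last by move=> i _; apply: kcomp.
rewrite [in RHS](partition_big K (fun C => C \in components H)) /=; last by move=> i _; apply: kcomp.
rewrite mulnC -sum_nat_const -big_split big_distrr /=.
apply: eq_bigr => C /compK[v ->].
rewrite (eq_bigl (fun u => u \in SC (K v))); last by move=> u; apply: memS.
rewrite [in RHS](eq_bigl (fun u => u \in SC (K v))); last by move=> u; apply: memS.
rewrite sum1_card.
have [tr cor] := hK v.
rewrite -(comp_count sH tr cor); congr (_ + _)%N.
apply: eq_bigr => u uS; rewrite /degS; apply: eq_card => w; rewrite !inE.
case: (boolP (H u w)) => huw; rewrite ?andbF ?andbT //.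
have [_ [sub _ _ _]] := hK v.
have ku := kc _ _ (subsetP sub _ uS).
have kw : K w = K v by rewrite -ku; apply: kc; exact: kH.
by rewrite kw.
Qed.
Lemma count_sum (R : pzSemiRingType) (T : finType) (P : pred T) (s : seq T) :
  ((count P s)%:R = \sum_(w | P w) (count_mem w s)%:R :> R)%R.
Proof.
elim: s => [|b s IH] /=.
  by rewrite big1.
rewrite natrD IH.
rewrite [RHS](eq_bigr (fun w => ((b == w) : nat)%:R + (count_mem w s)%:R)%R); last by move=> w _; rewrite /= natrD.
rewrite big_split /=; congr (_ + _)%R.
case: (boolP (P b)) => Pb.
  rewrite (bigD1 b) //= eqxx big1 ?addr0 // => w /andP[_ /negbTE]; by rewrite eq_sym => ->.
by rewrite big1 // => w Pw; case: (eqVneq b w) => // e; rewrite e Pw in Pb.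
Qed.

Lemma count_flat (T : finType) (g : T -> nat) w :
  count_mem w (flatten [seq nseq (g u) u | u <- enum T]) = g w.
Proof.
rewrite count_flatten -map_comp sumnE big_map /=.
rewrite (eq_bigr (fun u => (u == w) * g u)); last by move=> u _; rewrite count_nseq.
rewrite big_enum /= (bigD1 w) //= eqxx mul1n big1 ?addn0 // => u /negbTE ->.
by [].
Qed.

Lemma NAW_equiv (T : finType) (e : rel T) (l : nat) : (2 <= l)%N ->
  N_AW e l <->
  (forall f : T -> 'Z_l, exists x : T -> 'Z_l, forall v, (f v + \sum_(w | closed_nbhd e w v) x w = 0)%R).
Proof.
move=> l2; split.
- move=> hN f; have [s hs] := hN f.
  exists (fun w => (count_mem w s)%:R)%R => v.
  by rewrite -count_sum; apply: hs.
- move=> hf f; have [x hx] := hf f.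
  exists (flatten [seq nseq (x u : nat) u | u <- enum T]) => v.
  rewrite count_sum.
  rewrite (eq_bigr (fun w => x w)); first exact: hx.
  move=> w _; rewrite count_flat.
  move: (x w); case: l l2 {hf f x hx} => [|[|l']] // l2 y.
  exact: natr_Zp.
Qed.

Lemma unit_gcd (l c : nat) : (2 <= l)%N ->
  (((2 * c)%:R - 1)%R : 'Z_l) \is a GRing.unit <-> gcdz ((2 * c)%:Z - 1)%R l%:Z = 1.
Proof.
move=> l2; case: c => [|c].
  rewrite muln0 GRing.sub0r GRing.unitrN1; split => // _.
  by rewrite /gcdz /= gcd1n.
have h1 : (1 <= 2 * c.+1)%N by lia.
rewrite -(natrB _ h1) unitZpE // subzn // /gcdz /= gcdnC.
by rewrite /coprime; split => [/eqP -> | [] ->].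
Qed.

Theorem corollary3p11 (T : finType) (e : rel T) (l : nat) :
  simple_graph e -> (2 <= l)%N ->
  (forall C, C \in components (compl_rel e) -> is_pendant_tree (compl_rel e) C) ->
  N_AW e l <->
  gcdz ((2 * #|components (compl_rel e)|)%:Z - 1)%R l%:Z = 1.
Proof.
move=> [sE _] l2 hP.
have sH : symmetric (compl_rel e) by move=> x y; rewrite /compl_rel eq_sym sE.
have [S [m [a [ps hc]]]] := build sH hP.
rewrite NAW_equiv // -unit_gcd //.
exact: (core_equiv _ ps hc).
Qed.
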